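(* Let $X,Y$ be independent $\{0,1\}$-valued random variables with distributions $p_X,p_Y$, and let $q_{Z|XY}$ be a channel with finite output alphabet $\mathcal Z$. Let $f:\{0,1\}^2\to\{0,1\}$, $f(u,v)=\max(u,v)$. Suppose that for each $\epsilon\in[0,1]$, $(U_\epsilon,V_\epsilon)$ is a pair of independent $\{0,1\}$-valued random variables, independent of $X$, such that $f(U_\epsilon,V_\epsilon)$ has distribution $p_Y$; for each fixed $(y,u)$, $p_{f(U_\epsilon,V_\epsilon)|U_\epsilon}(y|u)$ is a continuous function of $\epsilon$; and $U_0=0=V_1$, $U_1=f(U_1,V_1)$, $V_0=f(U_0,V_0)$. For each $\epsilon$, let $Y=f(U_\epsilon,V_\epsilon)$ and let $Z$ be generated from $(X,Y)$ through $q_{Z|XY}$ (so the joint distribution is $p_{U_\epsilon}(u)p_{V_\epsilon}(v)p_X(x)\mathbf 1\{y=f(u,v)\}q_{Z|XY}(z|x,y)$). Define $R_1(\epsilon)=I(X;Z|U_\epsilon)$, $R_U(\epsilon)=I(U_\epsilon;Z)$, $R_V(\epsilon)=I(V_\epsilon;Z|U_\epsilon X)$. Then for every $\epsilon\in[0,1]$, $I(XY;Z)=R_1(\epsilon)+R_U(\epsilon)+R_V(\epsilon)$. Moreover, $R_1$ is continuous in $\epsilon$ and its image contains the interval $[I(X;Z),I(X;Z|Y)]$. *)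

(* Defs.v *)
From mathcomp Require Import all_boot all_order all_algebra.
From mathcomp Require Import all_classical all_reals all_analysis.
Import Order.TTheory GRing.Theory Num.Theory.
Local Open Scope ring_scope.

Set Implicit Arguments.
Unset Strict Implicit.
Unset Printing Implicit Defensive.

Definition is_pmf (R : realType) (T : finType) (p : T -> R) : Prop :=
  (forall t, 0 <= p t) /\ \sum_(t : T) p t = 1.

Definition prob (R : realType) (T : finType) (P : T -> R) (E : pred T) : R :=
  \sum_(t : T | E t) P t.

(* Conditional mutual information I(A;B|C) (in nats) of random variables
   fa, fb, fc defined on the finite sample space T with pmf P:
   I(A;B|C) = E[ log ( P(A,B,C) P(C) / (P(A,C) P(B,C)) ) ]. *)
Definition cmi (R : realType) (T : finType) (P : T -> R)
    (A B C : eqType) (fa : T -> A) (fb : T -> B) (fc : T -> C) : R :=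
  \sum_(t : T) P t *
    ln (prob P [pred s | (fa s == fa t) && (fb s == fb t) && (fc s == fc t)]
        * prob P [pred s | fc s == fc t]
        / (prob P [pred s | (fa s == fa t) && (fc s == fc t)]
           * prob P [pred s | (fb s == fb t) && (fc s == fc t)])).

Definition mi (R : realType) (T : finType) (P : T -> R)
    (A B : eqType) (fa : T -> A) (fb : T -> B) : R :=
  cmi P fa fb (fun _ => tt).

(* f : {0,1}^2 -> {0,1}, f(u,v) = max(u,v)  (booleans: false = 0, true = 1). *)
Definition fmax (u v : bool) : bool := u || v.

Definition jointUVXZ (R : realType) (Z : finType) (pU pV pX : bool -> R)
    (q : bool -> bool -> Z -> R) (t : bool * bool * bool * Z) : R :=
  let '(u, v, x, z) := t in pU u * pV v * pX x * q x (fmax u v) z.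

Definition tU (Z : finType) (t : bool * bool * bool * Z) : bool := t.1.1.1.
Definition tV (Z : finType) (t : bool * bool * bool * Z) : bool := t.1.1.2.
Definition tX (Z : finType) (t : bool * bool * bool * Z) : bool := t.1.2.
Definition tZ (Z : finType) (t : bool * bool * bool * Z) : Z := t.2.

Definition jointXYZ (R : realType) (Z : finType) (pX pY : bool -> R)
    (q : bool -> bool -> Z -> R) (t : bool * bool * Z) : R :=
  let '(x, y, z) := t in pX x * pY y * q x y z.

Definition sX (Z : finType) (t : bool * bool * Z) : bool := t.1.1.
Definition sY (Z : finType) (t : bool * bool * Z) : bool := t.1.2.
Definition sZ (Z : finType) (t : bool * bool * Z) : Z := t.2.

(* p_{f(U,V)|U}(y|u) for U, V independent: P(f(u,V) = y). *)
Definition cond_f_U (R : realType) (pV : bool -> R) (y u : bool) : R :=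
  \sum_(v : bool | fmax u v == y) pV v.

(* Main.v *)
Require Import Defs.
From mathcomp Require Import all_boot all_order all_algebra.
From mathcomp Require Import all_classical all_reals all_analysis.
From mathcomp Require Import ring lra.
Import Order.TTheory GRing.Theory Num.Theory.
Import numFieldNormedType.Exports.
Local Open Scope ring_scope.
Set Implicit Arguments.
Unset Strict Implicit.

Section Gen.
Variables (R : realType).

Lemma prob_eq (T : finType) (P : T -> R) (E1 E2 : pred T) :
  E1 =1 E2 -> prob P E1 = prob P E2.
Proof. by move=> h; apply: eq_bigl. Qed.

Lemma prob_ge (T : finType) (P : T -> R) (E : pred T) t :
  (forall s, 0 <= P s) -> E t -> P t <= prob P E.
Proof.
move=> h Et; rewrite /prob (bigD1 t) //= lerDl.
by apply: sumr_ge0 => s _; apply: h.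
Qed.

Lemma prob_ge0 (T : finType) (P : T -> R) (E : pred T) :
  (forall s, 0 <= P s) -> 0 <= prob P E.
Proof. by move=> h; apply: sumr_ge0 => s _. Qed.

Variable Z : finType.

Lemma sum4 (F : bool * bool * bool * Z -> R) :
  \sum_t F t = \sum_u \sum_v \sum_x \sum_z F (u, v, x, z).
Proof.
rewrite pair_big /= pair_big /= pair_big /=.
apply: eq_bigr => -[[[u v] x] z] _ //.
Qed.

Lemma sum3 (F : bool * bool * Z -> R) :
  \sum_t F t = \sum_x \sum_y \sum_z F (x, y, z).
Proof.
rewrite pair_big /= pair_big /=.
apply: eq_bigr => -[[x y] z] _ //.
Qed.

Lemma sum_pred1 (F : Z -> R) z : \sum_z' (if z' == z then F z' else 0) = F z.
Proof. by rewrite -big_mkcond big_pred1_eq. Qed.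
End Gen.

Section M4.
Variables (R : realType) (Z : finType) (pU pV pX : bool -> R) (q : bool -> bool -> Z -> R).
Let P := jointUVXZ pU pV pX q.

Lemma probZ (a : bool -> bool -> bool -> bool) z :
  prob P [pred s | a (tU s) (tV s) (tX s) && (tZ s == z)] =
  \sum_u \sum_v \sum_x (if a u v x then P (u, v, x, z) else 0).
Proof.
rewrite /prob big_mkcond sum4; apply: eq_bigr => u _; apply: eq_bigr => v _.
apply: eq_bigr => x _ /=.
rewrite -(@sum_pred1 R Z (fun z' => if a u v x then P (u, v, x, z') else 0) z).
by apply: eq_bigr => z' _; case: (a u v x); case: (z' == z).
Qed.

Lemma probnoZ (a : bool -> bool -> bool -> bool) :
  prob P [pred s | a (tU s) (tV s) (tX s)] =
  \sum_u \sum_v \sum_x (if a u v x then \sum_z P (u, v, x, z) else 0).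
Proof.
rewrite /prob big_mkcond sum4; apply: eq_bigr => u _; apply: eq_bigr => v _.
apply: eq_bigr => x _ /=.
by case: (a u v x) => //; rewrite big1.
Qed.

Definition W u x z := \sum_v pV v * q x (fmax u v) z.
Definition M u z := \sum_x pX x * W u x z.

Lemma m_uxz u v x z :
  prob P [pred s | (tX s == tX (u,v,x,z)) && (tZ s == tZ (u,v,x,z)) && (tU s == tU (u,v,x,z))]
  = pU u * pX x * W u x z.
Proof.
rewrite (@prob_eq R _ _ _ [pred s | (fun u' v' x' => (u' == u) && (x' == x)) (tU s) (tV s) (tX s) && (tZ s == z)]); last first.
  by move=> [[[u' v'] x'] z'] /=; case: (u' == u); case: (x' == x); case: (z' == z).
rewrite (probZ (fun u' v' x' => (u' == u) && (x' == x))) /W !big_bool /= /P /=.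
by case: u; case: x => /=; rewrite ?mul0r; ring.
Qed.
End M4.

Section M4b.
Variables (R : realType) (Z : finType) (pU pV pX : bool -> R) (q : bool -> bool -> Z -> R).
Hypothesis nU : pU true = 1 - pU false.
Hypothesis nV : pV true = 1 - pV false.
Hypothesis nX : pX true = 1 - pX false.
Hypothesis nq : forall x y, \sum_z q x y z = 1.
Let P := jointUVXZ pU pV pX q.
Definition K y := \sum_u \sum_v (if fmax u v == y then pU u * pV v else 0).
Definition N z := \sum_u pU u * M pV pX q u z.

Ltac canonZ a z :=
  rewrite (@prob_eq _ _ _ _ [pred s | a (tU s) (tV s) (tX s) && (tZ s == z)]);
      [rewrite (probZ _ _ _ _ a) | by move=> [[[? ?] ?] ?]; rewrite /tU /tV /tX /tZ /= ?xpair_eqE ?eqxx ?andbT; do ?[case: (_ == _)] ].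
Ltac canonN a :=
  rewrite (@prob_eq _ _ _ _ [pred s | a (tU s) (tV s) (tX s)]);
      [rewrite (probnoZ _ _ _ _ a) | by move=> [[[? ?] ?] ?]; rewrite /tU /tV /tX /tZ /= ?xpair_eqE ?eqxx ?andbT; do ?[case: (_ == _)] ].

Ltac fin u v x := case: u; case: v; case: x;
  rewrite /= /P /N /M /K /W ?big_bool /= /tU /tV /tX /tZ /=;
  rewrite -?mulr_sumr ?nq ?nU ?nV ?nX; ring.

Lemma mB1 (t : bool * bool * bool * Z) : prob P [pred s | (tX s == tX t) && (tZ s == tZ t) && (tU s == tU t)] =
  pU (tU t) * pX (tX t) * W pV q (tU t) (tX t) (tZ t).
Proof.
case: t => [[[u v] x] z].
canonZ (fun u' v' x' : bool => (u' == u) && (x' == x)) z; fin u v x.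
Qed.

Lemma mD4 (t : bool * bool * bool * Z) : prob P [pred s | (tZ s == tZ t) && ((tU s, tX s) == (tU t, tX t))] =
  pU (tU t) * pX (tX t) * W pV q (tU t) (tX t) (tZ t).
Proof.
case: t => [[[u v] x] z].
canonZ (fun u' v' x' : bool => (u' == u) && (x' == x)) z; fin u v x.
Qed.

Lemma mB2 (t : bool * bool * bool * Z) : prob P [pred s | tU s == tU t] = pU (tU t).
Proof.
case: t => [[[u v] x] z].
canonN (fun u' v' x' : bool => (u' == u)); fin u v x.
Qed.

Lemma mC2 (t : bool * bool * bool * Z) : prob P [pred s | (tU s == tU t) && (tt == tt)] = pU (tU t).
Proof.
case: t => [[[u v] x] z].
canonN (fun u' v' x' : bool => (u' == u)); fin u v x.
Qed.

Lemma mB3 (t : bool * bool * bool * Z) : prob P [pred s | (tX s == tX t) && (tU s == tU t)] = pU (tU t) * pX (tX t).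
Proof.
case: t => [[[u v] x] z].
canonN (fun u' v' x' : bool => (u' == u) && (x' == x)); fin u v x.
Qed.

Lemma mD2 (t : bool * bool * bool * Z) : prob P [pred s | (tU s, tX s) == (tU t, tX t)] = pU (tU t) * pX (tX t).
Proof.
case: t => [[[u v] x] z].
canonN (fun u' v' x' : bool => (u' == u) && (x' == x)); fin u v x.
Qed.

Lemma mB4 (t : bool * bool * bool * Z) : prob P [pred s | (tZ s == tZ t) && (tU s == tU t)] =
  pU (tU t) * M pV pX q (tU t) (tZ t).
Proof.
case: t => [[[u v] x] z].
canonZ (fun u' v' x' : bool => (u' == u)) z; fin u v x.
Qed.

Lemma mC1 (t : bool * bool * bool * Z) : prob P [pred s | (tU s == tU t) && (tZ s == tZ t) && (tt == tt)] =
  pU (tU t) * M pV pX q (tU t) (tZ t).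
Proof.
case: t => [[[u v] x] z].
canonZ (fun u' v' x' : bool => (u' == u)) z; fin u v x.
Qed.

Lemma mA3 (t : bool * bool * bool * Z) : prob P [pred s | (tZ s == tZ t) && (tt == tt)] = N (tZ t).
Proof.
case: t => [[[u v] x] z].
canonZ (fun u' v' x' : bool => true) z; fin u v x.
Qed.

Lemma mS : prob P [pred s : bool * bool * bool * Z | tt == tt] = 1.
Proof.
canonN (fun u' v' x' : bool => true).
rewrite /= /P ?big_bool /=.
rewrite -?mulr_sumr ?nq ?nU ?nV ?nX; ring.
Qed.

Lemma mD1 (t : bool * bool * bool * Z) : prob P [pred s | (tV s == tV t) && (tZ s == tZ t) && ((tU s, tX s) == (tU t, tX t))] = P t.
Proof.
case: t => [[[u v] x] z].
canonZ (fun u' v' x' : bool => (u' == u) && (v' == v) && (x' == x)) z; fin u v x.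
Qed.

Lemma mD3 (t : bool * bool * bool * Z) : prob P [pred s | (tV s == tV t) && ((tU s, tX s) == (tU t, tX t))] =
  pU (tU t) * pV (tV t) * pX (tX t).
Proof.
case: t => [[[u v] x] z].
canonN (fun u' v' x' : bool => (u' == u) && (v' == v) && (x' == x)); fin u v x.
Qed.

Lemma mA1 (t : bool * bool * bool * Z) : prob P [pred s | ((tX s, fmax (tU s) (tV s)) == (tX t, fmax (tU t) (tV t))) && (tZ s == tZ t) && (tt == tt)] =
  pX (tX t) * q (tX t) (fmax (tU t) (tV t)) (tZ t) * K (fmax (tU t) (tV t)).
Proof.
case: t => [[[u v] x] z].
canonZ (fun u' v' x' : bool => (x' == x) && (fmax u' v' == fmax u v)) z; fin u v x.
Qed.

Lemma mA2 (t : bool * bool * bool * Z) : prob P [pred s | ((tX s, fmax (tU s) (tV s)) == (tX t, fmax (tU t) (tV t))) && (tt == tt)] =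
  pX (tX t) * K (fmax (tU t) (tV t)).
Proof.
case: t => [[[u v] x] z].
canonN (fun u' v' x' : bool => (x' == x) && (fmax u' v' == fmax u v)); fin u v x.
Qed.
End M4b.

Section Chain.
Variables (R : realType) (Z : finType) (pU pV pX : bool -> R) (q : bool -> bool -> Z -> R).
Hypothesis nU : pU true = 1 - pU false.
Hypothesis nV : pV true = 1 - pV false.
Hypothesis nX : pX true = 1 - pX false.
Hypothesis nq : forall x y, \sum_z q x y z = 1.
Hypothesis gU : forall b, 0 <= pU b.
Hypothesis gV : forall b, 0 <= pV b.
Hypothesis gX : forall b, 0 <= pX b.
Hypothesis gq : forall x y z, 0 <= q x y z.

Lemma chain :
  let P := jointUVXZ pU pV pX q in 
  mi P (fun t => (tX t, fmax (tU t) (tV t))) (@tZ Z) =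
  cmi P (@tX Z) (@tZ Z) (@tU Z) + mi P (@tU Z) (@tZ Z) + cmi P (@tV Z) (@tZ Z) (fun t => (tU t, tX t)).
Proof.
move=> P.
rewrite /mi /cmi -!big_split /=; apply: eq_bigr => t _.
have hP : forall s, 0 <= P s.
  by move=> [[[u v] x] z]; rewrite /P /=; rewrite !mulr_ge0.
have [Pt0|Ptn] := eqVneq (P t) 0; first by rewrite Pt0 !mul0r !addr0.
have Pt : 0 < P t by rewrite lt_def Ptn hP.
have pos (E : pred (bool * bool * bool * Z)) : E t -> 0 < prob P E := fun h => lt_le_trans Pt (@prob_ge _ _ P E t hP h).
have Pe : P t = pU (tU t) * pV (tV t) * pX (tX t) * q (tX t) (fmax (tU t) (tV t)) (tZ t).
  by case: t {Ptn Pt pos} => [[[u v] x] z].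
have [[[hu hv] hx] hq] : [/\ 0 < pU (tU t), 0 < pV (tV t), 0 < pX (tX t) & 0 < q (tX t) (fmax (tU t) (tV t)) (tZ t)].
  move: Ptn; rewrite Pe !mulf_eq0 !negb_or => /andP[/andP[/andP[h1 h2] h3] h4].
  by rewrite !lt_def h1 h2 h3 h4 gU gV gX gq.
have hW : 0 < W pV q (tU t) (tX t) (tZ t).
  have := pos [pred s | (tX s == tX t) && (tZ s == tZ t) && (tU s == tU t)].
  by rewrite mB1 //= ?eqxx // => /(_ isT); rewrite pmulr_rgt0 // mulr_gt0.
have hM : 0 < M pV pX q (tU t) (tZ t).
  have := pos [pred s | (tZ s == tZ t) && (tU s == tU t)].
  by rewrite mB4 //= ?eqxx // => /(_ isT); rewrite pmulr_rgt0.
have hN : 0 < N pU pV pX q (tZ t).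
  have := pos [pred s | (tZ s == tZ t) && (tt == tt)].
  by rewrite mA3 //= ?eqxx // => /(_ isT).
have hK : 0 < K pU pV (fmax (tU t) (tV t)).
  have := pos [pred s | ((tX s, fmax (tU s) (tV s)) == (tX t, fmax (tU t) (tV t))) && (tt == tt)].
  by rewrite mA2 //= ?eqxx // => /(_ isT); rewrite pmulr_rgt0.
rewrite -!mulrDr; congr (_ * _).
rewrite mB1 // mB2 // mB3 // mB4 // mC1 // mC2 // mA3 // mS // mD1 // mD2 // mD3 // mD4 // mA1 // mA2 //.
rewrite -!lnM ?posrE ?divr_gt0 ?mulr_gt0 //.
have Pe' : jointUVXZ pU pV pX q t = pU (tU t) * pV (tV t) * pX (tX t) * q (tX t) (fmax (tU t) (tV t)) (tZ t) := Pe.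
congr ln; rewrite Pe'; field.
all: by rewrite ?gt_eqF ?invr_gt0 ?mulr_gt0.
Qed.

End Chain.

Section JDef.
Variables (R : realType) (Z : finType) (pX : bool -> R) (q : bool -> bool -> Z -> R).
Definition Wa (a : R) x z := a * q x false z + (1 - a) * q x true z.
Definition Ma (a : R) z := \sum_x pX x * Wa a x z.
Definition J (a : R) := \sum_x \sum_z pX x * Wa a x z * ln (Wa a x z / Ma a z).
End JDef.

Section R1F.
Variables (R : realType) (Z : finType) (pU pV pX : bool -> R) (q : bool -> bool -> Z -> R).
Hypothesis nU : pU true = 1 - pU false.
Hypothesis nV : pV true = 1 - pV false.
Hypothesis nX : pX true = 1 - pX false.
Hypothesis nq : forall x y, \sum_z q x y z = 1.
Hypothesis gU : forall b, 0 <= pU b.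
Hypothesis gV : forall b, 0 <= pV b.
Hypothesis gX : forall b, 0 <= pX b.
Hypothesis gq : forall x y z, 0 <= q x y z.

Lemma W_Wa u x z : W pV q u x z = Wa q (if u then 0 else pV false) x z.
Proof. by rewrite /W /Wa big_bool /=; case: u => /=; rewrite nV; ring. Qed.

Lemma M_Ma u z : M pV pX q u z = Ma pX q (if u then 0 else pV false) z.
Proof. by apply: eq_bigr => x _; rewrite W_Wa. Qed.

Lemma R1_formula :
  cmi (jointUVXZ pU pV pX q) (@tX Z) (@tZ Z) (@tU Z) =
  pU true * J pX q 0 + pU false * J pX q (pV false).
Proof.
set P := jointUVXZ pU pV pX q.
have hP : forall s, 0 <= P s.
  by move=> [[[u v] x] z]; rewrite /P /=; rewrite !mulr_ge0.
rewrite /cmi.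
transitivity (\sum_t P t * ln (W pV q (tU t) (tX t) (tZ t) / M pV pX q (tU t) (tZ t))).
  apply: eq_bigr => t _.
  have [Pt0|Ptn] := eqVneq (P t) 0; first by rewrite Pt0 !mul0r.
  have Pe : P t = pU (tU t) * pV (tV t) * pX (tX t) * q (tX t) (fmax (tU t) (tV t)) (tZ t).
    by case: t {Ptn} => [[[u v] x] z].
  have [hu hx] : pU (tU t) != 0 /\ pX (tX t) != 0.
    by move: Ptn; rewrite Pe !mulf_eq0 !negb_or => /andP[/andP[/andP[h1 h2] h3] h4].
  rewrite mB1 // mB2 // mB3 // mB4 //; congr (_ * ln _).
  have Pt : 0 < P t by rewrite lt_def Ptn hP.
  have hM : M pV pX q (tU t) (tZ t) != 0.
    have := lt_le_trans Pt (@prob_ge _ _ P [pred s | (tZ s == tZ t) && (tU s == tU t)] t hP _).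
    rewrite mB4 //= !eqxx => /(_ isT) h; apply/eqP => h0; move: h; by rewrite h0 mulr0 ltxx.
  by field; rewrite hu hx hM.
rewrite sum4 big_bool /=; congr (_ + _); rewrite big_bool -big_split mulr_sumr;
  apply: eq_bigr => x _; rewrite -big_split mulr_sumr; apply: eq_bigr => z _ /=;
  rewrite /P /tU /tV /tX /tZ /= !W_Wa !M_Ma /= /Wa nV; ring.
Qed.
End R1F.

Section XYZ.
Variables (R : realType) (Z : finType) (pX pY : bool -> R) (q : bool -> bool -> Z -> R).
Hypothesis nY : pY true = 1 - pY false.
Hypothesis nX : pX true = 1 - pX false.
Hypothesis nq : forall x y, \sum_z q x y z = 1.
Hypothesis gY : forall b, 0 <= pY b.
Hypothesis gX : forall b, 0 <= pX b.
Hypothesis gq : forall x y z, 0 <= q x y z.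
Let P := jointXYZ pX pY q.

Lemma probZ3 (a : bool -> bool -> bool) z :
  prob P [pred s | a (sX s) (sY s) && (sZ s == z)] =
  \sum_x \sum_y (if a x y then P (x, y, z) else 0).
Proof.
rewrite /prob big_mkcond sum3; apply: eq_bigr => x _; apply: eq_bigr => y _ /=.
rewrite -(@sum_pred1 R Z (fun z' => if a x y then P (x, y, z') else 0) z).
by apply: eq_bigr => z' _; case: (a x y); case: (z' == z).
Qed.

Lemma probnoZ3 (a : bool -> bool -> bool) :
  prob P [pred s | a (sX s) (sY s)] =
  \sum_x \sum_y (if a x y then \sum_z P (x, y, z) else 0).
Proof.
rewrite /prob big_mkcond sum3; apply: eq_bigr => x _; apply: eq_bigr => y _ /=.
by case: (a x y) => //; rewrite big1.
Qed.

Ltac canonZ3 a z :=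
  rewrite (@prob_eq _ _ _ _ [pred s | a (sX s) (sY s) && (sZ s == z)]);
      [rewrite (probZ3 a) | by move=> [[? ?] ?]; rewrite /sX /sY /sZ /= ?xpair_eqE ?eqxx ?andbT; do ?[case: (_ == _)] ].
Ltac canonN3 a :=
  rewrite (@prob_eq _ _ _ _ [pred s | a (sX s) (sY s)]);
      [rewrite (probnoZ3 a) | by move=> [[? ?] ?]; rewrite /sX /sY /sZ /= ?xpair_eqE ?eqxx ?andbT; do ?[case: (_ == _)] ].

Ltac fin3 x y := case: x; case: y;
  rewrite /= /P /Ma /Wa ?big_bool /= /sX /sY /sZ /=;
  rewrite -?mulr_sumr ?nq ?nY ?nX; ring.

Lemma e1 (t : bool * bool * Z) : prob P [pred s | (sX s == sX t) && (sZ s == sZ t) && (tt == tt)] =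
  pX (sX t) * Wa q (pY false) (sX t) (sZ t).
Proof. case: t => [[x y] z]; canonZ3 (fun x' y' : bool => x' == x) z; fin3 x y. Qed.

Lemma e2 : prob P [pred s : bool * bool * Z | tt == tt] = 1.
Proof. canonN3 (fun x' y' : bool => true); rewrite /= /P ?big_bool /= -?mulr_sumr ?nq ?nY ?nX; ring. Qed.

Lemma e3 (t : bool * bool * Z) : prob P [pred s | (sX s == sX t) && (tt == tt)] = pX (sX t).
Proof. case: t => [[x y] z]; canonN3 (fun x' y' : bool => x' == x); fin3 x y. Qed.

Lemma e4 (t : bool * bool * Z) : prob P [pred s | (sZ s == sZ t) && (tt == tt)] = Ma pX q (pY false) (sZ t).
Proof. case: t => [[x y] z]; canonZ3 (fun x' y' : bool => true) z; fin3 x y. Qed.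

Lemma f1 (t : bool * bool * Z) : prob P [pred s | (sX s == sX t) && (sZ s == sZ t) && (sY s == sY t)] = P t.
Proof. case: t => [[x y] z]; canonZ3 (fun x' y' : bool => (x' == x) && (y' == y)) z; fin3 x y. Qed.

Lemma f2 (t : bool * bool * Z) : prob P [pred s | sY s == sY t] = pY (sY t).
Proof. case: t => [[x y] z]; canonN3 (fun x' y' : bool => y' == y); fin3 x y. Qed.

Lemma f3 (t : bool * bool * Z) : prob P [pred s | (sX s == sX t) && (sY s == sY t)] = pX (sX t) * pY (sY t).
Proof. case: t => [[x y] z]; canonN3 (fun x' y' : bool => (x' == x) && (y' == y)); fin3 x y. Qed.

Lemma f4 (t : bool * bool * Z) : prob P [pred s | (sZ s == sZ t) && (sY s == sY t)] =
  pY (sY t) * Ma pX q (if sY t then 0 else 1) (sZ t).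
Proof. case: t => [[x y] z]; canonZ3 (fun x' y' : bool => y' == y) z; fin3 x y. Qed.

Lemma q_Wa x y z : q x y z = Wa q (if y then 0 else 1) x z.
Proof. by case: y; rewrite /Wa; ring. Qed.

Lemma hP3 : forall s, 0 <= P s.
Proof. by move=> [[x y] z]; rewrite /P /=; rewrite !mulr_ge0. Qed.

Lemma mi_formula : mi P (@sX Z) (@sZ Z) = J pX q (pY false).
Proof.
rewrite /mi /cmi.
transitivity (\sum_t P t * ln (Wa q (pY false) (sX t) (sZ t) / Ma pX q (pY false) (sZ t))).
  apply: eq_bigr => t _.
  have [Pt0|Ptn] := eqVneq (P t) 0; first by rewrite Pt0 !mul0r.
  have Pe : P t = pX (sX t) * pY (sY t) * q (sX t) (sY t) (sZ t) by case: t {Ptn} => [[x y] z].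
  have hx : pX (sX t) != 0.
    by move: Ptn; rewrite Pe !mulf_eq0 !negb_or => /andP[/andP[h1 h2] h3].
  have Pt : 0 < P t by rewrite lt_def Ptn hP3.
  have hM : Ma pX q (pY false) (sZ t) != 0.
    have := lt_le_trans Pt (@prob_ge _ _ P [pred s | (sZ s == sZ t) && (tt == tt)] t hP3 _).
    rewrite e4 //= !eqxx => /(_ isT) h; apply/eqP => h0; move: h; by rewrite h0 ltxx.
  rewrite e1 e2 e3 e4; congr (_ * ln _).
  by field; rewrite hx hM.
rewrite sum3 /J; apply: eq_bigr => x _.
rewrite big_bool -big_split; apply: eq_bigr => z _ /=.
rewrite /P /sX /sY /sZ /= /Wa nY; ring.
Qed.

Lemma cmi_formula : cmi P (@sX Z) (@sZ Z) (@sY Z) = pY true * J pX q 0 + pY false * J pX q 1.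
Proof.
rewrite /cmi.
transitivity (\sum_t P t * ln (Wa q (if sY t then 0 else 1) (sX t) (sZ t) / Ma pX q (if sY t then 0 else 1) (sZ t))).
  apply: eq_bigr => t _.
  have [Pt0|Ptn] := eqVneq (P t) 0; first by rewrite Pt0 !mul0r.
  have Pe : P t = pX (sX t) * pY (sY t) * q (sX t) (sY t) (sZ t) by case: t {Ptn} => [[x y] z].
  have [hx hy] : pX (sX t) != 0 /\ pY (sY t) != 0.
    by move: Ptn; rewrite Pe !mulf_eq0 !negb_or => /andP[/andP[h1 h2] h3].
  have Pt : 0 < P t by rewrite lt_def Ptn hP3.
  have hM : Ma pX q (if sY t then 0 else 1) (sZ t) != 0.
    have := lt_le_trans Pt (@prob_ge _ _ P [pred s | (sZ s == sZ t) && (sY s == sY t)] t hP3 _).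
    rewrite f4 //= !eqxx => /(_ isT) h; apply/eqP => h0; move: h; by rewrite h0 mulr0 ltxx.
  rewrite f1 f2 f3 f4; congr (_ * ln _).
  have Pe' : jointXYZ pX pY q t = pX (sX t) * pY (sY t) * Wa q (if sY t then 0 else 1) (sX t) (sZ t).
    by rewrite -q_Wa.
  by rewrite Pe (q_Wa (sX t)); field; rewrite hx hy hM.
rewrite sum3 exchange_big big_bool /= /J !mulr_sumr; congr (_ + _);
  apply: eq_bigr => x _; rewrite mulr_sumr; apply: eq_bigr => z _;
  rewrite /P /sX /sY /sZ /= (q_Wa x) /=; ring.
Qed.
End XYZ.

Local Open Scope classical_set_scope.

Section Phi.
Variable R : realType.
Definition phi (t : R) := t * ln t.

Lemma phi_bound (t : R) : `|t| <= 1 -> - (2 * Num.sqrt `|t|) <= phi t <= 2 * Num.sqrt `|t|.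
Proof.
move=> ht; rewrite /phi.
have [tle0|tgt0] := leP t 0.
  by rewrite ln0 // mulr0 oppr_le0 mulr_ge0 ?sqrtr_ge0.
have t1 : t <= 1 by move: ht; rewrite gtr0_norm.
rewrite gtr0_norm //.
have lnle : ln t <= 0 := ln_le0 t1.
apply/andP; split; last first.
  apply: (le_trans (y := 0)); first by rewrite mulr_ge0_le0 // ltW.
  by rewrite mulr_ge0 ?sqrtr_ge0.
set s := Num.sqrt t.
have s0 : 0 < s by rewrite sqrtr_gt0.
have ts : t = s * s by rewrite -expr2 sqr_sqrtr // ltW.
have lns : 1 - s^-1 <= ln s.
  have hs : 0 < s^-1 by rewrite invr_gt0.
  have : ln (1 + (s^-1 - 1)) <= s^-1 - 1 by apply: le_ln1Dx; lra.
  rewrite addrC subrK lnV ?posrE // => h2; lra.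
rewrite {1}ts [in ln t]ts lnM ?posrE //.
have s1 : s <= 1 by rewrite /s -sqrtr1 ler_sqrt.
have : s * s * (ln s + ln s) >= s * s * (2 - 2 * s^-1).
  rewrite ler_pM2l ?mulr_gt0 //; lra.
have -> : s * s * (2 - 2 * s^-1) = 2 * s * s - 2 * s.
  by field; rewrite gt_eqF.
move=> h; apply: le_trans h.
have : 0 <= s * s by rewrite mulr_ge0 // ltW.
lra.
Qed.

Lemma cont0 (g : R -> R) : continuous g -> g 0 = 0 -> g x @[x --> 0] --> 0.
Proof. by move=> hg g0; have := hg 0; rewrite /continuous_at g0. Qed.

Lemma phi_cont : continuous phi.
Proof.
move=> x; rewrite /continuous_at.
have [xlt0|xgt0|->] := ltrgtP x 0.
- have hn : \forall t \near x, phi t = 0.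
    near=> t; rewrite /phi ln0 ?mulr0 //; apply: ltW; near: t; exact: lt_nbhsl.
  have -> : phi x = 0 by rewrite /phi ln0 ?mulr0 // ltW.
  apply: cvg_trans (near_eq_cvg _) _.
    by near=> t; symmetry; near: t; exact: hn.
  exact: cvg_cst.
- apply: (@continuousM _ _ id (@ln R) x); first exact: cvg_id.
  exact: continuous_ln.
- have -> : phi 0 = 0 by rewrite /phi mul0r.
  have hc : continuous (fun t : R => 2 * Num.sqrt `|t|).
    move=> y; apply: (@continuousM _ _ (fun=> 2) (fun t : R => Num.sqrt `|t|) y).
      exact: cst_continuous.
    apply: (@continuous_comp _ _ _ (fun t : R => `|t|) Num.sqrt y).
      exact: norm_continuous.
    exact: sqrt_continuous.
  have h0 : (fun t : R => 2 * Num.sqrt `|t|) x @[x --> 0] --> 0.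
    have := hc 0; rewrite /continuous_at /=.
    set c := (X in _ --> X) => h.
    have c0 : c = 0.
      rewrite /c; have -> : `|0 : R| = 0 by apply: normr0.
      by rewrite sqrtr0 mulr0.
    by rewrite c0 in h.
  apply: (squeeze_cvgr (f := fun t => - (2 * Num.sqrt `|t|)) (h := fun t => 2 * Num.sqrt `|t|)).
  + near=> t; apply: phi_bound; apply: ltW; near: t.
    exact: (@nbhs0_lt R R 1 ltr01).
  + apply: cont0.
      by move=> y; apply: (@continuousN _ _ _ (fun t : R => 2 * Num.sqrt `|t|)); apply: hc.
    have -> : `|0 : R| = 0 by apply: normr0.
    by rewrite sqrtr0 mulr0 oppr0.
  + exact: h0.
Unshelve. all: end_near.
Qed.
End Phi.

Section JC.
Variables (R : realType) (Z : finType) (pX : bool -> R) (q : bool -> bool -> Z -> R).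
Hypothesis gX : forall b, 0 <= pX b.
Hypothesis gq : forall x y z, 0 <= q x y z.

Definition J' (a : R) := \sum_z (\sum_x pX x * phi (Wa q a x z) - phi (Ma pX q a z)).

Lemma cont_sum (T : topologicalType) (I : finType) (F : I -> T -> R) :
  (forall i, continuous (F i)) -> continuous (fun y => \sum_i F i y).
Proof.
move=> h; rewrite -fct_sumE.
apply: (big_ind (fun g : T -> R => continuous g)) => //.
- by move=> x; apply: cst_continuous.
- by move=> f g hf hg x; exact: (continuousD (hf x) (hg x)).
Qed.

Lemma Wa_cont x z : continuous (fun a : R => Wa q a x z).
Proof.
have -> : (fun a : R => Wa q a x z) = (fun a => a * (q x false z - q x true z) + q x true z).
  by apply/funext => b; rewrite /Wa; ring.
move=> a.
apply: (@continuousD _ _ _ (fun a : R => a * (q x false z - q x true z)) (fun=> q x true z)); last exact: cst_continuous.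
apply: (@continuousM _ _ id (fun=> (q x false z - q x true z))); [exact: cvg_id | exact: cst_continuous].
Qed.

Lemma Ma_cont z : continuous (fun a : R => Ma pX q a z).
Proof.
rewrite /Ma; apply: cont_sum => x a.
apply: (@continuousM _ _ (fun=> pX x) (fun a => Wa q a x z)); first exact: cst_continuous.
exact: Wa_cont.
Qed.

Lemma J'_cont : continuous J'.
Proof.
rewrite /J'; apply: cont_sum => z a.
apply: (@continuousB _ _ _ (fun a => \sum_x pX x * phi (Wa q a x z)) (fun a => phi (Ma pX q a z))).
  apply: cont_sum => x b.
  apply: (@continuousM _ _ (fun=> pX x) (fun a => phi (Wa q a x z))); first exact: cst_continuous.
  apply: continuous_comp; [exact: Wa_cont | exact: phi_cont].
apply: continuous_comp; [exact: Ma_cont | exact: phi_cont].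
Qed.

Lemma J_J' a : 0 <= a <= 1 -> J pX q a = J' a.
Proof.
move=> /andP[a0 a1].
have gW x z : 0 <= Wa q a x z.
  by rewrite /Wa addr_ge0 // mulr_ge0 // subr_ge0.
rewrite /J /J' exchange_big; apply: eq_bigr => z _ /=.
rewrite /phi mulr_suml -sumrB; apply: eq_bigr => x _.
have [->|hx] := eqVneq (pX x) 0; first by ring.
have [hw0|hw] := eqVneq (Wa q a x z) 0.
  by rewrite hw0; ring.
have px : 0 < pX x by rewrite lt_def hx gX.
have pw : 0 < Wa q a x z by rewrite lt_def hw gW.
have pM : 0 < Ma pX q a z.
  apply: (lt_le_trans (y := pX x * Wa q a x z)); first by rewrite mulr_gt0.
  rewrite /Ma big_bool; case: x {hx hw px pw}.
    by rewrite lerDl mulr_ge0.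
  by rewrite lerDr mulr_ge0.
rewrite lnM ?posrE ?invr_gt0 // lnV ?posrE //; ring.
Qed.
End JC.

Unset Implicit Arguments.
Set Strict Implicit.

Lemma sum_fmax0 (R : realType) (F : bool * bool -> R) :
  \sum_(w : bool * bool | fmax w.1 w.2 == false) F w = F (false, false).
Proof. by rewrite (bigD1 (false, false)) //= big1 ?addr0 // => -[[] []]. Qed.

Lemma pmf2 (R : realType) (p : bool -> R) : is_pmf p -> p true = 1 - p false.
Proof. by case=> _; rewrite big_bool => h; rewrite -h addrK. Qed.

Theorem lemma1 (R : realType) (Z : finType)
  (pX pY : bool -> R) (q : bool -> bool -> Z -> R)
  (pU pV : R -> bool -> R)
  (hX : is_pmf pX) (hY : is_pmf pY)
  (hq : forall x y, is_pmf (q x y))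
  (hU : forall e : R, e \in `[0, 1]%R -> is_pmf (pU e))
  (hV : forall e : R, e \in `[0, 1]%R -> is_pmf (pV e))
  (hfY : forall e : R, e \in `[0, 1]%R -> forall y : bool,
      \sum_(w : bool * bool | fmax w.1 w.2 == y) pU e w.1 * pV e w.2 = pY y)
  (hcont : forall y u : bool,
      {within `[0, 1], continuous (fun e : R => cond_f_U (pV e) y u)})
  (hU0 : pU 0%R true = 0%R)
  (hV1 : pV 1%R true = 0%R)
  (hU1 : \sum_(w : bool * bool | w.1 != fmax w.1 w.2) pU 1%R w.1 * pV 1%R w.2 = 0%R)
  (hV0 : \sum_(w : bool * bool | w.2 != fmax w.1 w.2) pU 0%R w.1 * pV 0%R w.2 = 0%R) :
  let P := fun e => jointUVXZ (pU e) (pV e) pX q in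
  let R1 := fun e => cmi (P e) (@tX Z) (@tZ Z) (@tU Z) in
  let RU := fun e => mi (P e) (@tU Z) (@tZ Z) in
  let RV := fun e => cmi (P e) (@tV Z) (@tZ Z) (fun t => (tU t, tX t)) in
  (forall e : R, e \in `[0, 1]%R ->
     mi (P e) (fun t => (tX t, fmax (tU t) (tV t))) (@tZ Z)
       = (R1 e + RU e + RV e)%R)
  /\ {within `[0, 1], continuous R1}
  /\ (forall r, r \in `[mi (jointXYZ pX pY q) (@sX Z) (@sZ Z),
                        cmi (jointXYZ pX pY q) (@sX Z) (@sZ Z) (@sY Z)]%R ->
        exists2 e, e \in `[0, 1]%R & R1 e = r).
Proof.
move=> P R1 RU RV.
have nX := @pmf2 _ pX hX; have nY := @pmf2 _ pY hY.
have gX := proj1 hX; have gY := proj1 hY.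
have nq x y : \sum_z q x y z = 1 := proj2 (hq x y).
have gq x y z : 0 <= q x y z := proj1 (hq x y) z.
have part1 : forall e : R, e \in `[0, 1]%R ->
     mi (P e) (fun t => (tX t, fmax (tU t) (tV t))) (@tZ Z) = (R1 e + RU e + RV e)%R.
  move=> e he; rewrite /R1 /RU /RV /P; apply: chain => //.
  - exact: (@pmf2 _ _ (hU e he)).
  - exact: (@pmf2 _ _ (hV e he)).
  - exact: (proj1 (hU e he)).
  - exact: (proj1 (hV e he)).
have in01 e : e \in `[0, 1]%R -> 0 <= e <= 1 by rewrite in_itv.
have hR1 e : e \in `[0, 1]%R -> R1 e = pU e true * J pX q 0 + pU e false * J pX q (pV e false).
  move=> he; rewrite /R1 /P R1_formula //.
  all: try first [ exact: (@pmf2 _ _ (hU e he)) | exact: (@pmf2 _ _ (hV e he)) | exact: (proj1 (hU e he)) | exact: (proj1 (hV e he)) ].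
have ha e : e \in `[0, 1]%R -> 0 <= pV e false <= 1.
  move=> he; have [g n] := hV e he; rewrite g /=.
  by move: n; rewrite big_bool => <-; rewrite lerDr g.
have hb e : e \in `[0, 1]%R -> pY false = pU e false * pV e false.
  by move=> he; rewrite -(hfY e he false) sum_fmax0.
set b := pY false.
pose F e := J' pX q 0 + (b / pV e false) * (J' pX q (pV e false) - J' pX q 0).
have hRF e : e \in `[0, 1]%R -> R1 e = F e.
  move=> he; rewrite hR1 // /F (@pmf2 _ _ (hU e he)) !J_J' // ?lexx ?ler01 ?ha //.
  have [a0|a0] := eqVneq (pV e false) 0.
    by rewrite a0; ring.
  have hbe := hb e he; rewrite -/b in hbe.
  by rewrite hbe mulfK //; ring.
have part2 : {within `[0, 1], continuous R1}.
  apply: (subspace_eq_continuous (f := F)).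
    move=> e; rewrite inE => he; rewrite /from_subspace /= hRF //.
  have hA : {within `[0, 1], continuous (fun e : R => pV e false)}.
    have := hcont false false.
    have -> : (fun e : R => cond_f_U (pV e) false false) = (fun e => pV e false).
      by apply/funext => e; rewrite /cond_f_U big_mkcond big_bool /= add0r.
    done.
  have [b0|bn] := eqVneq b 0.
    have -> : F = fun=> J' pX q 0 by apply/funext => e; rewrite /F b0 !mul0r addr0.
    exact: cst_continuous.
  rewrite continuous_subspace_in => x; rewrite inE => hx.
  have hx' : x \in `[0, 1]%R by exact: hx.
  have ax : pV x false != 0.
    by apply: contraNneq bn => h; rewrite /b (hb x hx') h mulr0.
  rewrite /F /continuous_at.
  apply: cvgD; first exact: cvg_cst.
  apply: cvgM.
    apply: cvgM; first exact: cvg_cst.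
    by apply: cvgV => //; exact: hA.
  apply: cvgB; last exact: cvg_cst.
  apply: continuous_comp; [exact: hA | exact: J'_cont].
split => //; split => //.
move=> r; rewrite in_itv /= => /andP[h1 h2].
have z01 : (0:R) \in `[0, 1]%R by rewrite in_itv /= lexx ler01.
have o01 : (1:R) \in `[0, 1]%R by rewrite in_itv /= lexx ler01.
have e0 : R1 0 = mi (jointXYZ pX pY q) (@sX Z) (@sZ Z).
  have u0 : pU 0 false = 1 by have := @pmf2 _ _ (hU 0 z01); rewrite hU0 => h; lra.
  have hb0 := hb 0 z01; rewrite u0 mul1r in hb0.
  rewrite hR1 // mi_formula // hU0 u0 mul0r add0r mul1r -hb0.
  all: try first [ exact: nY | exact: nX | exact: nq | exact: gY | exact: gX | exact: gq | done ].
have e1 : R1 1 = cmi (jointXYZ pX pY q) (@sX Z) (@sZ Z) (@sY Z).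
  have v1 : pV 1 false = 1 by have := @pmf2 _ _ (hV 1 o01); rewrite hV1 => h; lra.
  have hb1 := hb 1 o01; rewrite v1 mulr1 in hb1.
  have u1 := @pmf2 _ _ (hU 1 o01).
  rewrite hR1 // cmi_formula // v1 u1 nY hb1 //.
  all: try first [ exact: nY | exact: nX | exact: nq | exact: gY | exact: gX | exact: gq | done ].
apply: IVT; [exact: ler01 | exact: part2 | ].
rewrite e0 e1; apply/andP; split.
  by rewrite ge_min h1.
by rewrite le_max h2 orbT.
Qed.
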